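(* Let $\Phi$ be a Young function such that the limits $p_0=\lim_{t\to0^+}\frac{t\Phi'(t)}{\Phi(t)}$ and $p_\infty=\lim_{t\to\infty}\frac{t\Phi'(t)}{\Phi(t)}$ exist as finite real numbers. Then $p_{[\Phi]}=\max\{p_0,p_\infty\}$ and $q_{[\Phi]}=\min\{p_0,p_\infty\}$.
   Context: A Young function is a convex function $\Phi:[0,\infty)\to[0,\infty)$ with $\Phi(0)=0$, $\Phi(t)>0$ for $t>0$, and $\lim_{t\to\infty}\Phi(t)=\infty$. $\Phi'$ denotes the right derivative of $\Phi$. The Lebesgue exponents of $\Phi$ are $p_\Phi=\sup_{t>0}\frac{t\Phi'(t)}{\Phi(t)}$ and $q_\Phi=\inf_{t>0}\frac{t\Phi'(t)}{\Phi(t)}$. Two Young functions $\Phi,\Psi$ are equivalent if there is $C\ge1$ with $C^{-1}\Psi(t)\le\Phi(t)\le C\Psi(t)$ for all $t\ge0$; $[\Phi]$ denotes the set of Young functions equivalent to $\Phi$, and $p_{[\Phi]}=\inf\{p_\Psi:\Psi\in[\Phi]\}$, $q_{[\Phi]}=\sup\{q_\Psi:\Psi\in[\Phi]\}$. *)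

(* Defs.v *)
From HB Require Import structures.
From mathcomp Require Import all_boot all_order all_algebra.
From mathcomp Require Import all_classical all_reals all_analysis.
Set Implicit Arguments. Unset Strict Implicit. Unset Printing Implicit Defensive.
Import Order.TTheory GRing.Theory Num.Theory.
Import numFieldNormedType.Exports.
Local Open Scope classical_set_scope.
Local Open Scope ring_scope.

Section Young.
Variable R : realType.

Definition convex_on_nonneg (f : R -> R) : Prop :=
  forall x y (l : R), 0 <= x -> 0 <= y -> 0 <= l -> l <= 1 ->
    f (l * x + (1 - l) * y) <= l * f x + (1 - l) * f y.

(* A Young function Phi : [0,oo) -> [0,oo) (values at negative reals are
   irrelevant). *)
Definition young (f : R -> R) : Prop :=
  [/\ convex_on_nonneg f,
      f 0 = 0,
      (forall t, 0 < t -> 0 < f t) &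
      f x @[x --> +oo] --> +oo].

Definition rderiv (f : R -> R) (t : R) : R :=
  lim ((fun h => (f (t + h) - f t) / h) @ 0^'+).

Definition lindex (f : R -> R) (t : R) : R := t * rderiv f t / f t.

Definition p_exp (f : R -> R) : \bar R :=
  ereal_sup [set (lindex f t)%:E | t in [set t : R | 0 < t]].
Definition q_exp (f : R -> R) : \bar R :=
  ereal_inf [set (lindex f t)%:E | t in [set t : R | 0 < t]].

Definition young_equiv (f g : R -> R) : Prop :=
  exists C : R, 1 <= C /\
    forall t, 0 <= t -> C^-1 * g t <= f t /\ f t <= C * g t.

Definition young_class (f : R -> R) : set (R -> R) :=
  [set g | young g /\ young_equiv f g].

Definition p_class (f : R -> R) : \bar R :=
  ereal_inf [set p_exp g | g in young_class f].
Definition q_class (f : R -> R) : \bar R :=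
  ereal_sup [set q_exp g | g in young_class f].

End Young.

(* Main.v *)
Require Import Defs.
From HB Require Import structures.
From mathcomp Require Import all_boot all_order all_algebra.
From mathcomp Require Import all_classical all_reals all_analysis.
From mathcomp Require Import ring lra.
Import Order.TTheory GRing.Theory Num.Theory.
Import numFieldNormedType.Exports.
Local Open Scope classical_set_scope.
Local Open Scope ring_scope.

Set Implicit Arguments. Unset Strict Implicit.
Section S.
Variable R : realType.
Implicit Types (g : R -> R).

Lemma conv3 g : convex_on_nonneg g -> forall x y z, 0 <= x -> x < y -> y < z ->
  g y * (z - x) <= (z - y) * g x + (y - x) * g z.
Proof.
move=> cg x y z x0 xy yz.
have zx : 0 < z - x by lra.
have := cg x z ((z - y) / (z - x)) x0 (ltW (le_lt_trans x0 (lt_trans xy yz))).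
have -> : (z - y) / (z - x) * x + (1 - (z - y) / (z - x)) * z = y.
  by field; lra.
move=> /(_ _ _) H.
have l0 : 0 <= (z - y) / (z - x) by apply: divr_ge0; lra.
have l1 : (z - y) / (z - x) <= 1 by rewrite ler_pdivrMr //; lra.
have {H} := H l0 l1.
rewrite -(ler_pM2r zx).
have -> : ((z - y) / (z - x) * g x + (1 - (z - y) / (z - x)) * g z) * (z - x)
   = (z - y) * g x + (y - x) * g z by field; lra.
by [].
Qed.

Arguments conv3 {g} _ {x y z}.

Lemma ldd (a b h1 h2 : R) : 0 < h1 -> 0 < h2 -> a * h2 <= b * h1 -> a / h1 <= b / h2.
Proof.
move=> h10 h20 H; rewrite ler_pdivrMr // mulrAC ler_pdivlMr //.
Qed.

Definition qt g s h := (g (s + h) - g s) / h.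

Lemma qt_mono g s h1 h2 : convex_on_nonneg g -> 0 <= s -> 0 < h1 -> h1 <= h2 ->
  qt g s h1 <= qt g s h2.
Proof.
move=> cg s0 h10 h12; rewrite /qt.
have [->|h12'] := eqVneq h1 h2; first by [].
have lt12 : h1 < h2 by rewrite lt_neqAle h12' h12.
have := conv3 cg s0 (_ : s < s + h1) (_ : s + h1 < s + h2).
move=> /(_ ltac:(lra) ltac:(lra)) H.
by apply: ldd; nra.
Qed.

Lemma qt_lb g x s h : convex_on_nonneg g -> 0 <= x -> x < s -> 0 < h ->
  (g s - g x) / (s - x) <= qt g s h.
Proof.
move=> cg x0 xs h0; rewrite /qt.
have := conv3 cg x0 xs (_ : s < s + h) => /(_ ltac:(lra)) H.
by apply: ldd; nra.
Qed.

Lemma qt_cvg g s : convex_on_nonneg g -> 0 < s -> cvg (qt g s h @[h --> 0^'+]).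
Proof.
move=> cg s0; apply/cvg_ex; eexists.
apply: (@nondecreasing_at_right_cvgr _ _ 0 (BLeft 1)).
- by rewrite bnd_simp.
- move=> a b; rewrite !in_itv /= => /andP[a0 _] /andP[b0 _] ab.
  exact: qt_mono (ltW s0) a0 ab.
- exists ((g s - g 0) / (s - 0)); move=> y [h]; rewrite /= in_itv /= => /andP[h0 _] <-.
  exact: qt_lb.
Qed.

Lemma rd_cvg g s : convex_on_nonneg g -> 0 < s ->
  qt g s h @[h --> 0^'+] --> rderiv g s.
Proof. move=> cg s0; exact: qt_cvg. Qed.

Lemma rd_le g s h : convex_on_nonneg g -> 0 < s -> 0 < h -> rderiv g s <= qt g s h.
Proof.
move=> cg s0 h0; apply: limr_le; first exact: qt_cvg.
near=> k; apply: qt_mono => //; first exact: ltW.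
by near: k; apply: nbhs_right_ltW.
Unshelve. all: by end_near.
Qed.

Lemma rd_ge g x s : convex_on_nonneg g -> 0 <= x -> x < s ->
  (g s - g x) / (s - x) <= rderiv g s.
Proof.
move=> cg x0 xs; have s0 : 0 < s by apply: le_lt_trans xs.
apply: limr_ge; first exact: qt_cvg.
near=> k; apply: qt_lb => //.
Unshelve. all: by end_near.
Qed.

Lemma supp g s x : convex_on_nonneg g -> 0 < s -> 0 <= x ->
  g s + rderiv g s * (x - s) <= g x.
Proof.
move=> cg s0 x0.
have [xs|sx|->] := ltgtP x s; last by rewrite subrr mulr0 addr0.
- have := rd_ge cg x0 xs; rewrite ler_pdivrMr; last by lra.
  nra.
- have := rd_le cg s0 (_ : 0 < x - s) => /(_ ltac:(lra)).
  rewrite /qt (_ : s + (x - s) = x); last by ring.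
  rewrite ler_pdivlMr; last by lra.
  nra.
Qed.

Lemma rd_mono g s s' : convex_on_nonneg g -> 0 < s -> s <= s' ->
  rderiv g s <= rderiv g s'.
Proof.
move=> cg s0 ss'.
have [->|ne] := eqVneq s s'; first by [].
have lt : s < s' by rewrite lt_neqAle ne ss'.
have := supp cg s0 (ltW (lt_trans s0 lt)).
have := supp cg (lt_trans s0 lt) (ltW s0).
nra.
Qed.

Lemma conv_supp (h : R -> R) : h 0 = 0 -> (forall x, 0 <= x -> 0 <= h x) ->
  (forall z, 0 < z -> exists m, forall x, 0 <= x -> h z + m * (x - z) <= h x) ->
  convex_on_nonneg h.
Proof.
move=> h0 hpos hs x y l x0 y0 l0 l1.
have z0 : 0 <= l * x + (1 - l) * y by nra.
have hx := hpos x x0; have hy := hpos y y0.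
move: z0; rewrite le_eqVlt => /orP[/eqP ze|zp].
- rewrite -ze h0; nra.
- have [m Hm] := hs _ zp.
  have := Hm x x0; have := Hm y y0; nra.
Qed.

Lemma y_conv g : young g -> convex_on_nonneg g. Proof. by case. Qed.
Lemma y_0 g : young g -> g 0 = 0. Proof. by case. Qed.
Lemma y_pos g t : young g -> 0 < t -> 0 < g t. Proof. by case=> _ _ H _; apply: H. Qed.
Lemma y_ge0 g t : young g -> 0 <= t -> 0 <= g t.
Proof.
move=> yg; rewrite le_eqVlt => /orP[/eqP<-|t0]; first by rewrite (y_0 yg).
exact/ltW/y_pos.
Qed.

Lemma y_ind1 g s : young g -> 0 < s -> g s <= s * rderiv g s.
Proof.
move=> yg s0; have := supp (y_conv yg) s0 (lexx 0).
rewrite (y_0 yg); lra.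
Qed.

Lemma y_rdpos g s : young g -> 0 < s -> 0 < rderiv g s.
Proof.
move=> yg s0; have := y_ind1 yg s0; have := y_pos yg s0.
move=> a b; rewrite -(pmulr_rgt0 _ s0); lra.
Qed.

Lemma y_mono g x y : young g -> 0 <= x -> x <= y -> g x <= g y.
Proof.
move=> yg x0 xy; rewrite le_eqVlt in x0; case/orP: x0 => [/eqP xe|x0].
  by subst x; rewrite (y_0 yg); apply: y_ge0.
have := supp (y_conv yg) x0 (ltW (lt_le_trans x0 xy)).
have := y_rdpos yg x0; nra.
Qed.

Lemma lindex_le g t P : young g -> 0 < t ->
  (lindex g t <= P) = (t * rderiv g t <= P * g t).
Proof. by move=> yg t0; rewrite /lindex ler_pdivrMr // y_pos. Qed.

Lemma lindex_ge g t P : young g -> 0 < t ->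
  (P <= lindex g t) = (P * g t <= t * rderiv g t).
Proof. by move=> yg t0; rewrite /lindex ler_pdivlMr // y_pos. Qed.

Lemma y_lindex1 g t : young g -> 0 < t -> 1 <= lindex g t.
Proof. by move=> yg t0; rewrite lindex_ge // mul1r y_ind1. Qed.

Lemma grow_up g P rho s : young g -> 0 < s -> 1 < rho ->
  lindex g (rho * s) <= P -> (rho - P * (rho - 1)) * g (rho * s) <= rho * g s.
Proof.
move=> yg s0 r1; have rs0 : 0 < rho * s by apply: mulr_gt0 => //; lra.
rewrite lindex_le // => H2.
have H1 := supp (y_conv yg) rs0 (ltW s0).
have H3 : 0 <= rho - 1 by lra.
have := ler_wpM2r H3 H2.
nra.
Qed.

Lemma grow_lo g r rho s : young g -> 0 < s -> 1 <= rho ->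
  r <= lindex g s -> (1 + r * (rho - 1)) * g s <= g (rho * s).
Proof.
move=> yg s0 r1; have rs0 : 0 <= rho * s by apply: mulr_ge0; lra.
rewrite lindex_ge // => H2.
have H1 := supp (y_conv yg) s0 rs0.
have H3 : 0 <= rho - 1 by lra.
have := ler_wpM2r H3 H2.
nra.
Qed.

Lemma bern (q : R) n : 1 <= q -> 1 + n%:R * (q - 1) <= q ^+ n.
Proof.
move=> q1; elim: n => [|n IH]; first by rewrite expr0 mul0r addr0.
rewrite exprS -natr1.
have n0 : 0 <= n%:R :> R by [].
have q0 : 0 <= q by lra.
have := ler_wpM2l q0 IH.
have : 0 <= n%:R * ((q - 1) * (q - 1)) by apply: mulr_ge0 => //; nra.
nra.
Qed.

Lemma pow_big (q M : R) : 1 < q -> exists n, M < q ^+ n.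
Proof.
move=> q1.
have q0 : 0 < q - 1 by lra.
pose x := `|M| / (q - 1).
have x0 : 0 <= x by apply: divr_ge0 => //; lra.
exists (Num.Def.archi_bound x).
have := archi_boundP x0; set N := (Num.Def.archi_bound x)%:R => HN.
have := bern (Num.Def.archi_bound x) (ltW q1); rewrite -/N => HB.
have : `|M| < N * (q - 1) by rewrite -ltr_pdivrMr.
have := ler_norm M.
lra.
Qed.

Lemma up_iter g P rho s n : young g -> 0 < s -> 1 < rho ->
  0 <= rho - P * (rho - 1) ->
  (forall t, s < t -> t <= rho ^+ n * s -> lindex g t <= P) ->
  (rho - P * (rho - 1)) ^+ n * g (rho ^+ n * s) <= rho ^+ n * g s.
Proof.
move=> yg s0 r1 b0; elim: n => [|n IH] H.
  by rewrite !expr0 !mul1r.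
have rn1 : 1 <= rho ^+ n by apply: exprn_ege1; lra.
have rns : 0 < rho ^+ n * s by apply: mulr_gt0 => //; lra.
have le1 : rho ^+ n * s <= rho ^+ n.+1 * s.
  rewrite exprS -mulrA ler_peMl //; lra.
have IH' := IH (fun t st tle => H t st (le_trans tle le1)).
have e1 : rho ^+ n.+1 * s = rho * (rho ^+ n * s) by rewrite exprS mulrA.
have h1 : s < rho * (rho ^+ n * s) by nra.
have h2 : rho * (rho ^+ n * s) <= rho ^+ n.+1 * s by rewrite e1.
have HG := grow_up yg rns r1 (H _ h1 h2).
rewrite e1 !exprS.
have bn : 0 <= (rho - P * (rho - 1)) ^+ n by apply: exprn_ge0.
have := ler_wpM2l bn HG.
have := ler_wpM2l (_ : 0 <= rho) IH' => /(_ ltac:(lra)).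
nra.
Qed.

Lemma lo_iter g r rho s n : young g -> 0 < s -> 1 < rho ->
  0 <= 1 + r * (rho - 1) ->
  (forall t, s <= t -> t < rho ^+ n * s -> r <= lindex g t) ->
  (1 + r * (rho - 1)) ^+ n * g s <= g (rho ^+ n * s).
Proof.
move=> yg s0 r1 a0; elim: n => [|n IH] H.
  by rewrite !expr0 !mul1r.
have rn1 : 1 <= rho ^+ n by apply: exprn_ege1; lra.
have rns : 0 < rho ^+ n * s by apply: mulr_gt0 => //; lra.
have e1 : rho ^+ n.+1 * s = rho * (rho ^+ n * s) by rewrite exprS mulrA.
have lt1 : rho ^+ n * s < rho ^+ n.+1 * s by rewrite e1; nra.
have IH' := IH (fun t st tle => H t st (lt_trans tle lt1)).
have h1 : s <= rho ^+ n * s by nra.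
have HG := grow_lo yg rns (ltW r1) (H _ h1 lt1).
rewrite e1 exprS.
have := ler_wpM2l a0 IH'.
nra.
Qed.

Lemma CL (g1 g2 : R -> R) C A B rho : young g1 -> young g2 ->
  (forall t, 0 <= t -> g1 t <= C * g2 t /\ g2 t <= C * g1 t) ->
  0 < rho -> 0 <= A -> 0 <= B -> rho < A * B ->
  (forall n, exists2 s, 0 < s & A ^+ n * g1 s <= g1 (rho ^+ n * s) /\
       B ^+ n * g2 (rho ^+ n * s) <= rho ^+ n * g2 s) -> False.
Proof.
move=> y1 y2 HC r0 A0 B0 rAB H.
have C0 : 0 <= C.
  have [h _] := HC 1 ler01.
  have p1 := y_pos y1 ltr01; have p2 := y_pos y2 ltr01; nra.
have q1 : 1 < A * B / rho by rewrite ltr_pdivlMr // mul1r.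
have [n Hn] := pow_big (C * C) q1.
have [s s0 [H1 H2]] := H n.
have rn0 : 0 < rho ^+ n by apply: exprn_gt0.
have u0 : 0 <= rho ^+ n * s by apply: mulr_ge0; lra.
have [Ha _] := HC _ u0.
have [_ Hb] := HC _ (ltW s0).
have G0 := y_pos y1 s0.
have An0 : 0 <= A ^+ n by apply: exprn_ge0.
have Bn0 : 0 <= B ^+ n by apply: exprn_ge0.
have g2u := y_ge0 y2 u0.
have c1 := ler_wpM2l Bn0 H1.
have c2 := ler_wpM2l Bn0 Ha.
have c3 := ler_wpM2l C0 H2.
have Crn : 0 <= C * rho ^+ n by apply: mulr_ge0; lra.
have c4 := ler_wpM2l Crn Hb.
have : (A * B) ^+ n * g1 s <= C * C * rho ^+ n * g1 s.
  rewrite exprMn; nra.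
rewrite ler_pM2r // -ler_pdivrMr // -expr_div_n.
lra.
Qed.

Lemma choose_rho (P r : R) : 0 < P -> P < r -> exists rho, [/\ 1 < rho,
  0 <= rho - P * (rho - 1), 0 <= 1 + r * (rho - 1) &
  rho < (1 + r * (rho - 1)) * (rho - P * (rho - 1))].
Proof.
move=> P0 Pr; pose x := (r - P) / (2 * r * P).
have r0 : 0 < r by lra.
have x0 : 0 < x by apply: divr_gt0; [lra | nra].
have xe : x * (2 * r * P) = r - P by rewrite /x mulfVK //; nra.
exists (1 + x); split.
- lra.
- nra.
- nra.
- have : x * ((r - P) + r * (1 - P) * x) > 0.
    apply: mulr_gt0 => //.
    nra.
  nra.
Qed.

Definition Eqv g1 g2 C := forall t, 0 <= t -> g1 t <= C * g2 t /\ g2 t <= C * g1 t.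

Lemma Eqv_sym g1 g2 C : Eqv g1 g2 C -> Eqv g2 g1 C.
Proof. by move=> H t t0; have [a b] := H t t0. Qed.

Lemma equiv_Eqv g1 g2 : young_equiv g1 g2 -> exists C, Eqv g1 g2 C.
Proof.
move=> [C [C1 H]]; exists C => t t0; have [a b] := H t t0; split => //.
have C0 : 0 < C by lra.
by have := ler_wpM2l (ltW C0) a; rewrite mulrA mulfV ?gt_eqF // mul1r.
Qed.

Lemma A_gen g1 g2 C r1 r2 : young g1 -> young g2 -> Eqv g1 g2 C ->
  0 < r2 -> r2 < r1 ->
  ((exists2 T, 0 < T & forall t, T <= t -> r1 <= lindex g1 t /\ lindex g2 t <= r2) \/
   (exists2 d, 0 < d & forall t, 0 < t -> t <= d ->
        r1 <= lindex g1 t /\ lindex g2 t <= r2)) -> False.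
Proof.
move=> y1 y2 E r20 r21 Ht.
have [rho [rho1 B0 A0 rAB]] := choose_rho r20 r21.
apply: (CL y1 y2 E (_ : 0 < rho) A0 B0 rAB); first lra.
have r0 : 0 < rho by lra.
move=> n; have rn0 : 0 < rho ^+ n by apply: exprn_gt0.
have rn1 : 1 <= rho ^+ n by apply: exprn_ege1; lra.
case: Ht => [[T T0 HT]|[d d0 Hd]].
- exists T => //; split.
  + apply: (lo_iter y1 T0 rho1 A0) => t Tt _; exact: (HT t Tt).1.
  + apply: (up_iter y2 T0 rho1 B0) => t Tt _; exact: (HT t (ltW Tt)).2.
- have s0 : 0 < d / rho ^+ n by apply: divr_gt0.
  have e : rho ^+ n * (d / rho ^+ n) = d by rewrite mulrC divfK // gt_eqF.
  exists (d / rho ^+ n) => //; rewrite e; split.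
  + have := lo_iter (n:=n) y1 s0 rho1 A0; rewrite e; apply => t st td.
    exact: (Hd t (lt_le_trans s0 st) (ltW td)).1.
  + have := up_iter (n:=n) y2 s0 rho1 B0; rewrite e; apply => t st td.
    exact: (Hd t (lt_trans s0 st) td).2.
Qed.

Lemma tail0 (f : R -> R) (p e : R) : f t @[t --> 0^'+] --> p -> 0 < e ->
  exists2 d, 0 < d & forall t, 0 < t -> t <= d -> p - e < f t /\ f t < p + e.
Proof.
move=> /cvgrPdist_lt /(_ e) H /H [d /= d0 Hd]; exists (d / 2); first by lra.
move=> t t0 td; have : `|p - f t| < e.
  apply: Hd => //=; rewrite sub0r normrN gtr0_norm //; lra.
rewrite ltr_norml; lra.
Qed.

Lemma tailoo (f : R -> R) (p e : R) : f t @[t --> +oo] --> p -> 0 < e ->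
  exists2 T, 0 < T & forall t, T <= t -> p - e < f t /\ f t < p + e.
Proof.
move=> /cvgrPdist_lt /(_ e) H /H [M [Mr HM]]; exists (Num.max 1 (M + 1)).
  by rewrite lt_max ltr01.
move=> t; rewrite ge_max => /andP[_ Mt]; have : `|p - f t| < e by apply: HM; lra.
rewrite ltr_norml; lra.
Qed.

Definition Tail g p :=
  (forall e, 0 < e -> exists2 T, 0 < T &
     forall t, T <= t -> p - e < lindex g t /\ lindex g t < p + e) \/
  (forall e, 0 < e -> exists2 d, 0 < d &
     forall t, 0 < t -> t <= d -> p - e < lindex g t /\ lindex g t < p + e).

Lemma tail_ge1 g p : young g -> Tail g p -> 1 <= p.
Proof.
move=> yg Tg; rewrite leNgt; apply/negP => p1.
have e0 : 0 < 1 - p by lra.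
case: Tg => [/(_ _ e0) [T T0 H]|/(_ _ e0) [d d0 H]].
- have [_ h] := H T (lexx T); have := y_lindex1 yg T0; lra.
- have [_ h] := H d d0 (lexx d); have := y_lindex1 yg d0; lra.
Qed.

Lemma p_exp_ub g t : 0 < t -> ((lindex g t)%:E <= p_exp g)%E.
Proof. by move=> t0; apply: ereal_sup_ubound; exists t. Qed.

Lemma q_exp_lb g t : 0 < t -> (q_exp g <= (lindex g t)%:E)%E.
Proof. by move=> t0; apply: ereal_inf_lbound; exists t. Qed.

Lemma A_p_one f g p : young f -> young g -> young_equiv f g -> Tail f p ->
  (p%:E <= p_exp g)%E.
Proof.
move=> yf yg eq Tf; have [C E] := equiv_Eqv eq.
rewrite leNgt; apply/negP => lt.
have u1 := p_exp_ub g ltr01.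
move: lt u1; case Ep: (p_exp g) => [P| |] //= lt u1.
have l1 := y_lindex1 yg ltr01.
rewrite lte_fin in lt; rewrite lee_fin in u1.
have HP : forall t, 0 < t -> lindex g t <= P.
  by move=> t t0; have := p_exp_ub g t0; rewrite Ep lee_fin.
have e0 : 0 < (p - P) / 2 by lra.
have P0 : 0 < P by lra.
have Pr : P < (p + P) / 2 by lra.
apply: (A_gen yf yg E P0 Pr).
case: Tf => [/(_ _ e0) [T T0 H]|/(_ _ e0) [d d0 H]]; [left; exists T | right; exists d] => //.
- move=> t Tt; have [a _] := H t Tt; split; first lra.
  by apply: HP; lra.
- move=> t t0 td; have [a _] := H t t0 td; split; first lra.
  exact: HP.
Qed.

Lemma A_q_one f g p : young f -> young g -> young_equiv f g -> Tail f p ->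
  (q_exp g <= p%:E)%E.
Proof.
move=> yf yg eq Tf; have [C E] := equiv_Eqv eq.
have p1 := tail_ge1 yf Tf.
rewrite leNgt; apply/negP => lt.
have u1 := q_exp_lb g ltr01.
move: lt u1; case Ep: (q_exp g) => [Q| |] //= lt u1.
rewrite lte_fin in lt; rewrite lee_fin in u1.
have HQ : forall t, 0 < t -> Q <= lindex g t.
  by move=> t t0; have := q_exp_lb g t0; rewrite Ep lee_fin.
have e0 : 0 < (Q - p) / 2 by lra.
have P0 : 0 < (p + Q) / 2 by lra.
have Pr : (p + Q) / 2 < Q by lra.
apply: (A_gen yg yf (Eqv_sym E) P0 Pr).
case: Tf => [/(_ _ e0) [T T0 H]|/(_ _ e0) [d d0 H]]; [left; exists T | right; exists d] => //.
- move=> t Tt; have [_ a] := H t Tt; split; last lra.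
  by apply: HQ; lra.
- move=> t t0 td; have [_ a] := H t t0 td; split; last lra.
  exact: HQ.
Qed.

Definition SuppAt (h : R -> R) z m := forall x, 0 <= x -> h z + m * (x - z) <= h x.

Lemma suppA g s : convex_on_nonneg g -> 0 < s -> SuppAt g s (rderiv g s).
Proof. by move=> cg s0 x x0; apply: supp. Qed.

Lemma supp_maxl (h1 h2 : R -> R) z m : SuppAt h1 z m -> h2 z <= h1 z ->
  SuppAt (fun x => Num.max (h1 x) (h2 x)) z m.
Proof.
move=> H le x x0; rewrite (max_l le); apply: le_trans (H x x0) _.
by rewrite le_max lexx.
Qed.

Lemma supp_maxr (h1 h2 : R -> R) z m : SuppAt h2 z m -> h1 z <= h2 z ->
  SuppAt (fun x => Num.max (h1 x) (h2 x)) z m.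
Proof.
move=> H le x x0; rewrite (max_r le); apply: le_trans (H x x0) _.
by rewrite le_max lexx orbT.
Qed.

Lemma supp_scale (h : R -> R) z m K : 0 <= K -> SuppAt h z m ->
  SuppAt (fun x => K * h x) z (K * m).
Proof.
move=> K0 H x x0; have := ler_wpM2l K0 (H x x0).
by rewrite mulrDr mulrA.
Qed.

Lemma conv_suppA (h : R -> R) : h 0 = 0 -> (forall x, 0 <= x -> 0 <= h x) ->
  (forall z, 0 < z -> exists m, SuppAt h z m) -> convex_on_nonneg h.
Proof. by move=> h0 hp hs; apply: conv_supp. Qed.

Lemma rd_le_near g s B : convex_on_nonneg g -> 0 < s ->
  (forall e, 0 < e -> \forall h \near 0^'+, qt g s h <= B + e) -> rderiv g s <= B.
Proof.
move=> cg s0 H; apply/ler_addgt0Pr => e e0; apply: limr_le; first exact: qt_cvg.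
exact: H.
Qed.

Lemma rd_ge_near g s B : convex_on_nonneg g -> 0 < s ->
  (\forall h \near 0^'+, B <= qt g s h) -> B <= rderiv g s.
Proof. by move=> cg s0 H; apply: limr_ge; first exact: qt_cvg. Qed.

Lemma qt_near g s e : convex_on_nonneg g -> 0 < s -> 0 < e ->
  \forall h \near 0^'+, qt g s h <= rderiv g s + e.
Proof.
move=> cg s0 e0; have := rd_cvg cg s0.
move=> /cvgrPdist_lt /(_ e e0); apply: filterS => h.
rewrite ltr_norml; lra.
Qed.

Lemma qt_max (f1 f2 : R -> R) t h : 0 < h ->
  qt (fun x => Num.max (f1 x) (f2 x)) t h <= Num.max (qt f1 t h) (qt f2 t h).
Proof.
move=> h0; rewrite /qt /= le_max.
have [a b] : f1 t <= Num.max (f1 t) (f2 t) /\ f2 t <= Num.max (f1 t) (f2 t).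
  by rewrite !le_max !lexx orbT.
case: (leP (f2 (t + h)) (f1 (t + h))) => H.
- apply/orP; left; rewrite ler_pM2r ?invr_gt0 //; lra.
- apply/orP; right; rewrite ler_pM2r ?invr_gt0 //; lra.
Qed.

Lemma qt_maxl (f1 f2 : R -> R) t h : 0 < h -> f2 t <= f1 t ->
  qt f1 t h <= qt (fun x => Num.max (f1 x) (f2 x)) t h.
Proof.
move=> h0 le; rewrite /qt /= (max_l le) ler_pM2r ?invr_gt0 //.
by rewrite lerD2r le_max lexx.
Qed.

Lemma qt_maxr (f1 f2 : R -> R) t h : 0 < h -> f1 t <= f2 t ->
  qt f2 t h <= qt (fun x => Num.max (f1 x) (f2 x)) t h.
Proof.
move=> h0 le; rewrite /qt /= (max_r le) ler_pM2r ?invr_gt0 //.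
by rewrite lerD2r le_max lexx orbT.
Qed.

Lemma young_of (f h : R -> R) : young f -> convex_on_nonneg h -> h 0 = 0 ->
  (forall t, 0 <= t -> f t <= h t) -> young h.
Proof.
move=> yf ch h0 fh; split => //.
- by move=> t t0; apply: lt_le_trans (y_pos yf t0) (fh t (ltW t0)).
- case: yf => _ _ _ /cvgryPge fi; apply/cvgryPge => A.
  have := fi A; apply: filter_app; near=> x => Ax.
  apply: le_trans Ax (fh x _); near: x; exact: nbhs_pinfty_ge.
Unshelve. all: by end_near.
Qed.

Definition Lf (f : R -> R) S t := if t <= S then f t else f S + rderiv f S * (t - S).

Section Pside.
Variables (f : R -> R) (a d T : R).
Hypotheses (yf : young f) (a1 : 1 <= a) (d0 : 0 < d) (dT : d <= T)
  (Hd : forall t, 0 < t -> t <= d -> lindex f t <= a)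
  (HT : forall t, T <= t -> lindex f t <= a).

Let S := d / 2.
Let S0 : 0 < S. Proof. by rewrite /S divr_gt0. Qed.
Let Sd : S < d. Proof. by rewrite /S ltr_pdivrMr // mulr_natr mulr2n ltrDr. Qed.
Let cf := y_conv yf.
Let DS := rderiv f S.
Let DS0 : 0 < DS. Proof. exact: y_rdpos. Qed.
Let fS0 : 0 < f S. Proof. exact: y_pos. Qed.
Let T0 : 0 < T. Proof. move: d0 dT; lra. Qed.
Let K := T * rderiv f T / (a * f S).
Let K0 : 0 <= K.
Proof.
rewrite /K; apply: divr_ge0; last by apply: mulr_ge0; move: a1 fS0; lra.
by apply: mulr_ge0; [move: T0; lra | exact/ltW/y_rdpos].
Qed.
Let KaS : K * (a * f S) = T * rderiv f T.
Proof. by rewrite /K divfK // gt_eqF //; apply: mulr_gt0 => //; move: a1; lra. Qed.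

Ltac ctx := move: (a1) (d0) (dT) (S0) (Sd) (DS0) (fS0) (T0) (K0) (KaS);
  move=> ? ? ? ? ? ? ? ? ? ?.

Let L := Lf f S.
Let g t := Num.max (f t) (K * L t).

Let L_le t : 0 <= t -> L t <= f t.
Proof.
ctx.
move=> t0; rewrite /L /Lf; case: ifP => // /negbT; rewrite -ltNge => St.
by have := supp cf S0 t0.
Qed.

Let L_geS t : S <= t -> f S <= L t.
Proof.
ctx.
move=> St; rewrite /L /Lf; case: ifP => [tS|_].
  by have -> : t = S by apply/eqP; rewrite eq_le tS St.
have : 0 <= DS * (t - S) by apply: mulr_ge0; lra.
rewrite /DS; lra.
Qed.

Let L_suppA z : 0 < z -> exists m, SuppAt L z m.
Proof.
ctx.
move=> z0; case: (leP z S) => zS.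
- exists (rderiv f z) => x x0; rewrite /L /Lf zS.
  case: ifP => [//|/negbT]; first by move=> _; exact: supp.
  rewrite -ltNge => Sx.
  have H1 := supp cf z0 (ltW S0).
  have H2 := rd_mono cf z0 zS.
  have : 0 <= (rderiv f S - rderiv f z) * (x - S) by apply: mulr_ge0; lra.
  nra.
- exists DS => x x0; rewrite /L /Lf.
  have -> : (z <= S) = false by apply/negbTE; rewrite -ltNge.
  case: ifP => [xS|/negbT]; last by rewrite /DS => _; lra.
  have := supp cf S0 x0; rewrite /DS; lra.
Qed.

Let L0 : L 0 = 0.
Proof. by rewrite /L /Lf (ltW S0) (y_0 yf). Qed.

Let L_ge0 t : 0 <= t -> 0 <= L t.
Proof.
ctx.
move=> t0; case: (leP t S) => tS.
  by rewrite /L /Lf tS; apply: y_ge0.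
have := L_geS (ltW tS); lra.
Qed.

Let g_conv : convex_on_nonneg g.
Proof.
ctx.
apply: conv_suppA.
- by rewrite /g L0 mulr0 (y_0 yf) maxxx.
- move=> x x0; rewrite /g le_max; apply/orP; left; exact: y_ge0.
- move=> z z0; case: (leP (K * L z) (f z)) => H.
  + exists (rderiv f z); apply: supp_maxl => //; exact: suppA.
  + have [m Hm] := L_suppA z0.
    exists (K * m); apply: supp_maxr; last exact: ltW.
    exact: supp_scale.
Qed.

Let g_young : young g.
Proof.
ctx.
apply: (young_of yf g_conv).
- by rewrite /g L0 mulr0 (y_0 yf) maxxx.
- by move=> t t0; rewrite /g le_max lexx.
Qed.

Let g_equiv : young_equiv f g.
Proof.
ctx.
exists (1 + K); split; first lra.
move=> t t0; have ft := y_ge0 yf t0; have Lt := L_le t0.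
have gf : f t <= g t by rewrite /g le_max lexx.
have gu : g t <= (1 + K) * f t.
  rewrite /g ge_max; apply/andP; split; first nra.
  have := ler_wpM2l K0 Lt; nra.
have K1 : 0 < 1 + K by lra.
split; last nra.
by rewrite ler_pdivrMl // mulrC.
Qed.

Let F1 t : 0 < t -> t * rderiv f t <= a * g t.
Proof.
ctx.
move=> t0; have gf : f t <= g t by rewrite /g le_max lexx.
have good : t <= d \/ T <= t -> t * rderiv f t <= a * g t.
  move=> [td|Tt].
  - have := Hd t0 td; rewrite lindex_le // => H; nra.
  - have := HT Tt; rewrite lindex_le // => H; nra.
case: (leP t d) => td; first by apply: good; left.
case: (leP T t) => Tt; first by apply: good; right.
have D1 := rd_mono cf t0 (ltW Tt).
have D0 := y_rdpos yf t0.
have LS := L_geS (ltW (lt_trans Sd td)).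
have gL : K * L t <= g t by rewrite /g le_max lexx orbT.
have := ler_wpM2l K0 LS.
nra.
Qed.

Let F2 t : 0 < t -> K * (t * (if t < S then rderiv f t else DS)) <= a * g t.
Proof.
ctx.
move=> t0; have gL : K * L t <= g t by rewrite /g le_max lexx orbT.
suff : t * (if t < S then rderiv f t else DS) <= a * L t.
  move=> /(ler_wpM2l K0) H; nra.
case: ifP => tS.
- have -> : L t = f t by rewrite /L /Lf (ltW tS).
  by rewrite -lindex_le //; apply: Hd => //; lra.
- move/negbT: tS; rewrite -leNgt => St.
  have : S * DS <= a * f S by rewrite /DS -lindex_le //; apply: Hd; lra.
  rewrite /L /Lf -/DS; case: ifP => [tS|_].
    by have -> : t = S by apply/eqP; rewrite eq_le tS St.
  have : 0 <= (a - 1) * (DS * (t - S)) by apply: mulr_ge0; nra.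
  nra.
Qed.

Let g_index t : 0 < t -> lindex g t <= a.
Proof.
ctx.
move=> t0; rewrite (lindex_le a g_young t0).
have gt0 := y_pos g_young t0.
rewrite -ler_pdivlMl //.
apply: (rd_le_near g_conv t0).
move=> e e0.
have K1 : 0 < 1 + K by lra.
have e10 : 0 < e / (1 + K) by apply: divr_gt0.
have B1 : rderiv f t <= t^-1 * (a * g t).
  by rewrite ler_pdivlMl //; apply: F1.
have B2 : K * (if t < S then rderiv f t else DS) <= t^-1 * (a * g t).
  rewrite ler_pdivlMl // mulrCA; exact: F2.
have ee : e / (1 + K) * (1 + K) = e by rewrite divfK // gt_eqF.
have Ke : K * (e / (1 + K)) <= e.
  have : 0 <= e / (1 + K) by lra.
  nra.
have e1le : e / (1 + K) <= e by rewrite ler_pdivrMr //; nra.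
have := qt_near cf t0 e10.
case: (ltP t S) => tS.
- rewrite tS /= in B2; apply: filter_app; near=> h => Hq.
  have h0 : 0 < h by near: h; exact: nbhs_right_gt.
  have hS : h < S - t by near: h; apply: nbhs_right_lt; lra.
  have eqL : qt (fun x => K * L x) t h = K * qt f t h.
    rewrite /qt /L /Lf (ltW tS).
    have -> : (t + h <= S) = true by apply/idP; lra.
    by rewrite -mulrBr mulrA.
  apply: le_trans (qt_max _ _ _ h0) _.
  rewrite eqL ge_max; apply/andP; split; first lra.
  have := ler_wpM2l K0 Hq; nra.
- rewrite ltNge tS /= in B2; apply: filter_app; near=> h => Hq.
  have h0 : 0 < h by near: h; exact: nbhs_right_gt.
  have eqL : qt (fun x => K * L x) t h = K * DS.
    rewrite /qt /L /Lf.
    have -> : (t + h <= S) = false by apply/negbTE; rewrite -ltNge; lra.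
    case: ifP => [tS'|_].
      have -> : t = S by apply/eqP; rewrite eq_le tS' tS.
      rewrite /DS; field; lra.
    rewrite /DS; field; lra.
  apply: le_trans (qt_max _ _ _ h0) _.
  rewrite eqL ge_max; apply/andP; split; first lra.
  lra.
Unshelve. all: by end_near.
Qed.

Lemma p_construct : exists g, [/\ young g, young_equiv f g & forall t, 0 < t -> lindex g t <= a].
Proof. by exists g; split; [exact: g_young | exact: g_equiv | exact: g_index]. Qed.

End Pside.

Lemma delta2 g P c : young g -> 0 < P -> (forall t, 0 < t -> lindex g t <= P) ->
  0 <= c -> exists C, 0 <= C /\ forall t, 0 <= t -> g (c * t) <= C * g t.
Proof.
move=> yg P0 HP c0.
pose rho := 1 + (2 * P)^-1.
have ip : 0 < (2 * P)^-1 by rewrite invr_gt0; lra.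
have r1 : 1 < rho by rewrite /rho; lra.
have B0 : 0 < rho - P * (rho - 1).
  have Px : P * (2 * P)^-1 = 1 / 2 by field; lra.
  rewrite /rho; lra.
have [n Hn] := pow_big c r1.
have rn0 : 0 < rho ^+ n by apply: exprn_gt0; lra.
have Bn0 : 0 < (rho - P * (rho - 1)) ^+ n by apply: exprn_gt0.
exists (rho ^+ n / (rho - P * (rho - 1)) ^+ n); split.
  by apply: divr_ge0; apply: ltW.
move=> t; rewrite le_eqVlt => /orP[/eqP<-|t0].
  by rewrite mulr0 (y_0 yg) mulr0.
have := up_iter (n:=n) yg t0 r1 (ltW B0) (fun s ts _ => HP s (lt_trans t0 ts)).
move=> H.
have ct : c * t <= rho ^+ n * t by rewrite ler_pM2r //; apply: ltW.
have := y_mono yg (mulr_ge0 c0 (ltW t0)) ct.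
rewrite mulrAC ler_pdivlMr //.
have := y_ge0 yg (ltW t0).
nra.
Qed.

Lemma bdd_index (f : R -> R) d T P1 P2 : young f -> 0 < d -> d <= T ->
  (forall t, 0 < t -> t <= d -> lindex f t <= P1) ->
  (forall t, T <= t -> lindex f t <= P2) ->
  exists P, 0 < P /\ forall t, 0 < t -> lindex f t <= P.
Proof.
move=> yf d0 dT H1 H2.
pose P := Num.max 1 (Num.max P1 (Num.max P2 (T * rderiv f T / f d))).
exists P; split; first by rewrite lt_max ltr01.
move=> t t0.
case: (leP t d) => td.
  by apply: le_trans (H1 t t0 td) _; rewrite /P !le_max lexx /= orbT.
case: (leP T t) => Tt.
  by apply: le_trans (H2 t Tt) _; rewrite /P !le_max lexx /= !orbT.
apply: (@le_trans _ _ (T * rderiv f T / f d)); last by rewrite /P !le_max lexx /= !orbT.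
have fd := y_pos yf d0.
have ft : f d <= f t by apply: y_mono => //; lra.
have D1 := rd_mono (y_conv yf) t0 (ltW Tt).
have D0 := y_rdpos yf t0.
rewrite lindex_le // mulrAC ler_pdivlMr //.
have h1 : t * rderiv f t <= T * rderiv f T by apply: ler_pM; lra.
have h2 : t * rderiv f t * f d <= T * rderiv f T * f t.
  by apply: ler_pM => //; [nra | lra].
lra.
Qed.

Section Qside.
Variables (f : R -> R) (b d T P : R).
Hypotheses (yf : young f) (b0 : 0 <= b) (d0 : 0 < d) (dT : d <= T) (P0 : 0 < P)
  (Hd : forall t, 0 < t -> t <= d -> b <= lindex f t)
  (HT : forall t, T <= t -> b <= lindex f t)
  (HP : forall t, 0 < t -> lindex f t <= P).

Let cf := y_conv yf.
Let T0 : 0 < T. Proof. move: d0 dT; lra. Qed.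
Let T1 := T + d.
Let T10 : 0 < T1. Proof. rewrite /T1; move: d0 T0; lra. Qed.
Let TT1 : T < T1. Proof. rewrite /T1; move: d0; lra. Qed.
Let D := f T1.
Let D0 : 0 < D. Proof. exact: y_pos. Qed.
Let c := 2 * T1 / d.
Let c0 : 0 < c. Proof. by rewrite /c divr_gt0 // mulr_gt0. Qed.
Let cd : c * d = 2 * T1. Proof. by rewrite /c divfK // gt_eqF. Qed.
Let diff0 : 0 < f (2 * T1) - f T1.
Proof.
have := supp cf T10 (_ : 0 <= 2 * T1) => /(_ (ltW (mulr_gt0 (ltr0Sn _ 1) T10))).
have := y_rdpos yf T10; move: T10 => ? ? ?; nra.
Qed.
Let K := (f T + 1) / (f (2 * T1) - f T1).
Let K0 : 0 < K. Proof. rewrite /K; apply: divr_gt0 => //; have := y_pos yf T0; lra. Qed.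
Let Kd : K * (f (2 * T1) - f T1) = f T + 1. Proof. by rewrite /K divfK // gt_eqF. Qed.


Let N t := Num.max (f (c * t) - D) 0.
Let g t := Num.max (f t) (K * N t).

Let N0 : N 0 = 0.
Proof. by rewrite /N mulr0 (y_0 yf) sub0r max_r // oppr_le0 ltW. Qed.

Let N_ge0 t : 0 <= N t.
Proof. by rewrite /N le_max lexx orbT. Qed.

Let N_le t : 0 <= t -> N t <= f (c * t).
Proof.
move=> t0; have := y_ge0 yf (mulr_ge0 (ltW c0) t0); have := D0.
rewrite /N ge_max => ? ?; apply/andP; split; lra.
Qed.

Let N_supp z : 0 < z -> exists m, SuppAt N z m.
Proof.
move=> z0; case: (leP 0 (f (c * z) - D)) => H.
- exists (c * rderiv f (c * z)); apply: supp_maxl => // x x0.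
  have cz : 0 < c * z by apply: mulr_gt0.
  have := supp cf cz (mulr_ge0 (ltW c0) x0).
  have -> : rderiv f (c * z) * (c * x - c * z) = c * rderiv f (c * z) * (x - z) by ring.
  lra.
- exists 0; apply: supp_maxr; last exact: ltW.
  by move=> x x0; rewrite mul0r addr0.
Qed.

Let g_conv : convex_on_nonneg g.
Proof.
apply: conv_suppA.
- by rewrite /g N0 mulr0 (y_0 yf) maxxx.
- move=> x x0; rewrite /g le_max; apply/orP; left; exact: y_ge0.
- move=> z z0; case: (leP (K * N z) (f z)) => H.
  + exists (rderiv f z); apply: supp_maxl => //; exact: suppA.
  + have [m Hm] := N_supp z0.
    exists (K * m); apply: supp_maxr; last exact: ltW.
    by apply: supp_scale => //; apply: ltW.
Qed.

Let g_young : young g.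
Proof.
apply: (young_of yf g_conv).
- by rewrite /g N0 mulr0 (y_0 yf) maxxx.
- by move=> t t0; rewrite /g le_max lexx.
Qed.

Let g_equiv : young_equiv f g.
Proof.
have [C [C0 HC]] := delta2 yf P0 HP (ltW c0).
have KC : 0 <= K * C by apply: mulr_ge0 => //; apply: ltW.
exists (1 + K * C); split; first by move: KC; lra.
move=> t t0; have ft := y_ge0 yf t0.
have gf : f t <= g t by rewrite /g le_max lexx.
have KCf := mulr_ge0 KC ft.
have gu : g t <= (1 + K * C) * f t.
  rewrite /g ge_max; apply/andP; split; first by lra.
  have := ler_wpM2l (ltW K0) (le_trans (N_le t0) (HC t t0)); lra.
have K1 : 0 < 1 + K * C by move: KC; lra.
split; last by have := mulr_ge0 KC (le_trans ft gf); lra.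
by rewrite ler_pdivrMl // mulrC.
Qed.

Let g_index t : 0 < t -> b <= lindex g t.
Proof.
move=> t0; rewrite (lindex_ge b g_young t0).
have hc0 := c0; have hcd := cd; have hK0 := K0; have hKd := Kd.
clearbody K c.
case: (leP (K * N t) (f t)) => H.
- have gt : g t = f t by rewrite /g max_l.
  have good : t <= d \/ T <= t.
    case: (leP t d) => td; first by left.
    case: (leP T t) => Tt; first by right.
    exfalso.
    have ct : 2 * T1 <= c * t by rewrite -hcd ler_pM2l //; apply: ltW.
    have f2 := y_mono yf (ltW (mulr_gt0 (ltr0Sn _ 1) T10)) ct.
    have NN : f (2 * T1) - f T1 <= N t by rewrite /N le_max; apply/orP; left; rewrite -/D; lra.
    have := ler_wpM2l (ltW hK0) NN.
    have := y_mono yf (ltW t0) (ltW Tt).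
    have := hKd.
    lra.
  have Hb : b * f t <= t * rderiv f t.
    by rewrite -lindex_ge //; case: good => [td|Tt]; [apply: Hd | apply: HT].
  have : rderiv f t <= rderiv g t.
    apply: (rd_ge_near g_conv t0); near=> h.
    have h0 : 0 < h by near: h; exact: nbhs_right_gt.
    apply: le_trans (rd_le cf t0 h0) _.
    exact: (qt_maxl (f1:=f) (f2:=fun x => K * N x) h0 H).
  move=> /(ler_wpM2l (ltW t0)).
  rewrite gt; lra.
- have gt : g t = K * N t by rewrite /g max_r //; apply: ltW.
  have ft := y_pos yf t0.
  have Npos : 0 < N t.
    rewrite lt_neqAle N_ge0 andbT; apply/eqP => N0'.
    by move: H; rewrite -N0' mulr0 => /(lt_trans ft); rewrite ltxx.
  have NE : N t = f (c * t) - D.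
    move: Npos; rewrite /N; case: (leP (f (c * t) - D) 0) => //.
    by rewrite ltxx.
  have cT : T1 < c * t.
    rewrite ltNge; apply/negP => le.
    have := y_mono yf (mulr_ge0 (ltW hc0) (ltW t0)) le.
    move: Npos; rewrite NE /D; lra.
  have ct0 : 0 < c * t by apply: mulr_gt0.
  have Hb : b * f (c * t) <= c * t * rderiv f (c * t).
    by rewrite -lindex_ge //; apply: HT; move: TT1; lra.
  have : K * c * rderiv f (c * t) <= rderiv g t.
    apply: (rd_ge_near g_conv t0); near=> h.
    have h0 : 0 < h by near: h; exact: nbhs_right_gt.
    apply: le_trans _ (qt_maxr (f1:=f) (f2:=fun x => K * N x) h0 (ltW H)).
    have ch0 : 0 < c * h by apply: mulr_gt0.
    have R1 := rd_le cf ct0 ch0.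
    have Nth : f (c * (t + h)) - D <= N (t + h) by rewrite /N le_max lexx.
    rewrite /qt NE mulrDr in Nth *.
    rewrite /qt in R1.
    have hi : 0 < h^-1 by rewrite invr_gt0.
    rewrite -mulrBr -!mulrA ler_pM2l //.
    have e1 : c * ((f (c * t + c * h) - f (c * t)) / (c * h)) =
              (f (c * t + c * h) - f (c * t)) / h.
      by field; apply/andP; split; apply: lt0r_neq0.
    have := ler_wpM2l (ltW hc0) R1; rewrite e1 => R2.
    apply: (le_trans R2).
    rewrite ler_pM2r //; lra.
  have bD : 0 <= K * (b * D) by apply: mulr_ge0; [apply: ltW | apply: mulr_ge0 => //; apply: ltW].
  rewrite gt NE.
  move=> Hr.
  have := ler_wpM2l (ltW t0) Hr.
  have := ler_wpM2l (ltW hK0) Hb.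
  lra.
Unshelve. all: by end_near.
Qed.

Lemma q_construct : exists g, [/\ young g, young_equiv f g & forall t, 0 < t -> b <= lindex g t].
Proof. by exists g; split; [exact: g_young | exact: g_equiv | exact: g_index]. Qed.

End Qside.

End S.

Unset Implicit Arguments.

Theorem mainTheorem12 (R : realType) (Phi : R -> R) (p0 pinf : R) :
  young Phi ->
  lindex Phi t @[t --> 0^'+] --> p0 ->
  lindex Phi t @[t --> +oo] --> pinf ->
  p_class Phi = (Num.max p0 pinf)%:E /\ q_class Phi = (Num.min p0 pinf)%:E.
Proof.
move=> yf h0 hoo.
have Tz : Tail Phi p0.
  right => e e0; have [d d0 H] := tail0 h0 e0; exists d => //.
have Tinf : Tail Phi pinf.
  left => e e0; have [T T0 H] := tailoo hoo e0; exists T => //.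
have p01 := tail_ge1 yf Tz.
have poo1 := tail_ge1 yf Tinf.
have tails : forall e, 0 < e -> exists d T, [/\ 0 < d, d <= T,
    (forall t, 0 < t -> t <= d -> p0 - e < lindex Phi t /\ lindex Phi t < p0 + e) &
    (forall t, T <= t -> pinf - e < lindex Phi t /\ lindex Phi t < pinf + e)].
  move=> e e0; have [d d0 Hd] := tail0 h0 e0; have [T T1 HT] := tailoo hoo e0.
  exists d, (Num.max T d); split => //; first by rewrite le_max lexx orbT.
  by move=> t; rewrite ge_max => /andP[Tt _]; apply: HT.
split.
- have lo : ((Num.max p0 pinf)%:E <= p_class Phi)%E.
    apply: le_ereal_inf_tmp => _ [g [yg eg] <-].
    have a1 := A_p_one yf yg eg Tz; have a2 := A_p_one yf yg eg Tinf.
    by case: (leP p0 pinf) => _; [exact: a2 | exact: a1].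
  have up : forall e, 0 < e -> (p_class Phi <= (Num.max p0 pinf + e)%:E)%E.
    move=> e e0; have [d [T [d0 dT Hd HT]]] := tails e e0.
    have m0 : p0 <= Num.max p0 pinf by rewrite le_max lexx.
    have m1 : pinf <= Num.max p0 pinf by rewrite le_max lexx orbT.
    have a1 : 1 <= Num.max p0 pinf + e by lra.
    have Hd' : forall t, 0 < t -> t <= d -> lindex Phi t <= Num.max p0 pinf + e.
      by move=> t t0 td; have := (Hd t t0 td).2; lra.
    have HT' : forall t, T <= t -> lindex Phi t <= Num.max p0 pinf + e.
      by move=> t Tt; have := (HT t Tt).2; lra.
    have [g [yg eg Hg]] := p_construct yf a1 d0 dT Hd' HT'.
    apply: (@le_trans _ _ (p_exp g)).
      by apply: ereal_inf_lbound; exists g.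
    by apply: ge_ereal_sup => _ [t t0 <-]; rewrite lee_fin; apply: Hg.
  move: lo up; case: (p_class Phi) => [x| |] //= lo up.
  - rewrite lee_fin in lo; congr (_%:E); apply/eqP; rewrite eq_le lo andbT.
    apply/ler_addgt0Pr => e e0; by have := up e e0; rewrite lee_fin.
  - by have := up 1 ltr01.
- have up : ((q_class Phi) <= (Num.min p0 pinf)%:E)%E.
    apply: ge_ereal_sup => _ [g [yg eg] <-].
    have a1 := A_q_one yf yg eg Tz; have a2 := A_q_one yf yg eg Tinf.
    by case: (leP p0 pinf) => _; [exact: a1 | exact: a2].
  have lo : forall e, 0 < e -> e < 1 -> ((Num.min p0 pinf - e)%:E <= q_class Phi)%E.
    move=> e e0 e1; have [d [T [d0 dT Hd HT]]] := tails e e0.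
    have m0 : Num.min p0 pinf <= p0 by rewrite ge_min lexx.
    have m1 : Num.min p0 pinf <= pinf by rewrite ge_min lexx orbT.
    have m2 : 1 <= Num.min p0 pinf by rewrite le_min p01 poo1.
    have b0 : 0 <= Num.min p0 pinf - e by lra.
    have Hd' : forall t, 0 < t -> t <= d -> Num.min p0 pinf - e <= lindex Phi t.
      by move=> t t0 td; have := (Hd t t0 td).1; lra.
    have HT' : forall t, T <= t -> Num.min p0 pinf - e <= lindex Phi t.
      by move=> t Tt; have := (HT t Tt).1; lra.
    have Hd2 : forall t, 0 < t -> t <= d -> lindex Phi t <= p0 + e.
      by move=> t t0 td; have := (Hd t t0 td).2; lra.
    have HT2 : forall t, T <= t -> lindex Phi t <= pinf + e.
      by move=> t Tt; have := (HT t Tt).2; lra.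
    have [P [P0 HP]] := bdd_index yf d0 dT Hd2 HT2.
    have [g [yg eg Hg]] := q_construct yf b0 d0 dT P0 Hd' HT' HP.
    apply: (@le_trans _ _ (q_exp g)); last first.
      by apply: ereal_sup_ubound; exists g.
    by apply: le_ereal_inf_tmp => _ [t t0 <-]; rewrite lee_fin; apply: Hg.
  move: lo up; case: (q_class Phi) => [x| |] //= lo up.
  - rewrite lee_fin in up; congr (_%:E); apply/eqP; rewrite eq_le up /=.
    apply/ler_addgt0Pr => e e0.
    pose e' := Num.min e (1 / 2).
    have e'0 : 0 < e' by rewrite lt_min e0 /=; lra.
    have e'1 : e' < 1 by rewrite gt_min; apply/orP; right; lra.
    have e'e : e' <= e by rewrite ge_min lexx.
    by have := lo e' e'0 e'1; rewrite lee_fin; lra.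
  - have h12 : (0 : R) < 1 / 2 by lra.
    by have := lo _ h12 (_ : 1 / 2 < 1); rewrite /= => /(_ ltac:(lra)).
Qed.
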